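(* Let $0<r_i<r_o$, $0<h<H$, $n>0$, $p>0$, and set $\Omega^-=[r_i,r_o]\times[0,h]$ in the $(r,z)$-plane. Let $\boldsymbol\sigma^0$ be the axisymmetric stress field $$\sigma^0_r=a+a_r r^{-2/n},\quad \sigma^0_\theta=a+a_\theta r^{-2/n},\quad \sigma^0_z=a+a_z r^{-2/n},\quad \sigma^0_{rz}=0,$$ with $$a=p\,\frac{r_i^{2/n}}{r_o^{2/n}-r_i^{2/n}},\quad a_r=-p\,\frac{r_i^{2/n}r_o^{2/n}}{r_o^{2/n}-r_i^{2/n}},\quad a_\theta=\frac{n-2}{n}a_r,\quad a_z=\frac{n-1}{n}a_r,$$ and put $c=3^{\frac{n-1}{2}}\,a_r|a_r|^{n-1}\,n^{-n}$. Then for every admissible virtual stress field $\delta\boldsymbol\sigma$ (defined in the context) $$\int_{\Omega^-}\dot{\boldsymbol\varepsilon}(\boldsymbol\sigma^0):\delta\boldsymbol\sigma\;r\,dr\,dz=-\int_{r_i}^{r_o}\frac{c}{r}\,\delta\sigma_{rz}(r,h)\,r\,dr .$$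
   Context: Axisymmetric stress fields in a pipe are described in cylindrical coordinates by components $\sigma_r,\sigma_\theta,\sigma_z,\sigma_{rz}$ depending on $(r,z)\in[r_i,r_o]\times[0,H]$ (all other shear components vanish). An admissible virtual stress field $\delta\boldsymbol\sigma$ is a continuously differentiable such field on $[r_i,r_o]\times[0,H]$ satisfying the axisymmetric equilibrium equations $$\frac{\partial \sigma_r}{\partial r}+\frac{1}{r}(\sigma_r-\sigma_\theta)+\frac{\partial\sigma_{rz}}{\partial z}=0,\qquad \frac{\partial\sigma_{rz}}{\partial r}+\frac{1}{r}\sigma_{rz}+\frac{\partial\sigma_z}{\partial z}=0,$$ and the homogeneous boundary conditions $\sigma_r=\sigma_{rz}=0$ at $r=r_i$ and $r=r_o$, and $\sigma_{rz}=0$ at $z=0$ and $z=H$. Norton's creep law (with unit coefficient): $\dot{\boldsymbol\varepsilon}(\boldsymbol\sigma)=\boldsymbol s\,(\sigma_{vM})^{n-1}$, where $\boldsymbol s=\boldsymbol\sigma-\frac13\mathrm{tr}(\boldsymbol\sigma)\boldsymbol I$ is the stress deviator and $\sigma_{vM}=\sqrt{\tfrac32\boldsymbol s:\boldsymbol s}$. For axisymmetric tensors, $\boldsymbol\varepsilon:\boldsymbol\sigma=\varepsilon_r\sigma_r+\varepsilon_\theta\sigma_\theta+\varepsilon_z\sigma_z+2\varepsilon_{rz}\sigma_{rz}$. *)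

(* Defs.v *)
From Stdlib Require Import Reals Lra.
From Coquelicot Require Import Coquelicot.
Open Scope R_scope.

Definition in_rect (r0 r1 z0 z1 : R) (r z : R) : Prop :=
  r0 <= r <= r1 /\ z0 <= z <= z1.

Definition cont_on_rect (r0 r1 z0 z1 : R) (f : R -> R -> R) : Prop :=
  forall r z, in_rect r0 r1 z0 z1 r z ->
    filterlim (fun p : R * R => f (fst p) (snd p))
      (within (fun p : R * R => in_rect r0 r1 z0 z1 (fst p) (snd p)) (locally (r, z)))
      (locally (f r z)).

Definition partial_r_on_rect (r0 r1 z0 z1 : R) (f fr : R -> R -> R) : Prop :=
  forall r z, in_rect r0 r1 z0 z1 r z ->
    filterlim (fun t => (f t z - f r z) / (t - r))
      (within (fun t => r0 <= t <= r1 /\ t <> r) (locally r))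
      (locally (fr r z)).

Definition partial_z_on_rect (r0 r1 z0 z1 : R) (f fz : R -> R -> R) : Prop :=
  forall r z, in_rect r0 r1 z0 z1 r z ->
    filterlim (fun t => (f r t - f r z) / (t - z))
      (within (fun t => z0 <= t <= z1 /\ t <> z) (locally z))
      (locally (fz r z)).

Definition C1_on_rect (r0 r1 z0 z1 : R) (f fr fz : R -> R -> R) : Prop :=
  cont_on_rect r0 r1 z0 z1 f /\
  partial_r_on_rect r0 r1 z0 z1 f fr /\ partial_z_on_rect r0 r1 z0 z1 f fz /\
  cont_on_rect r0 r1 z0 z1 fr /\ cont_on_rect r0 r1 z0 z1 fz.

(** Axisymmetric stress field: components sigma_r, sigma_theta, sigma_z, sigma_rz
    as functions of (r,z); the other shear components vanish. *)
Record axi_stress := AxiStress {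
  s_r : R -> R -> R; s_th : R -> R -> R; s_z : R -> R -> R; s_rz : R -> R -> R }.

Definition admissible (ri ro H : R) (ds : axi_stress) : Prop :=
  exists d_r_r d_r_z d_th_r d_th_z d_z_r d_z_z d_rz_r d_rz_z : R -> R -> R,
    C1_on_rect ri ro 0 H (s_r ds) d_r_r d_r_z /\
    C1_on_rect ri ro 0 H (s_th ds) d_th_r d_th_z /\
    C1_on_rect ri ro 0 H (s_z ds) d_z_r d_z_z /\
    C1_on_rect ri ro 0 H (s_rz ds) d_rz_r d_rz_z /\
    (forall r z, in_rect ri ro 0 H r z ->
       d_r_r r z + / r * (s_r ds r z - s_th ds r z) + d_rz_z r z = 0 /\
       d_rz_r r z + / r * s_rz ds r z + d_z_z r z = 0) /\
    (forall z, 0 <= z <= H ->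
       s_r ds ri z = 0 /\ s_rz ds ri z = 0 /\ s_r ds ro z = 0 /\ s_rz ds ro z = 0) /\
    (forall r, ri <= r <= ro -> s_rz ds r 0 = 0 /\ s_rz ds r H = 0).

(** Real power x^y: Rpower for x > 0; at x <= 0 we use the convention
    0^0 = 1 and 0 otherwise (never used in the theorem, where the base is > 0). *)
Definition rpow (x y : R) : R :=
  if Rlt_dec 0 x then Rpower x y else if Req_EM_T y 0 then 1 else 0.

Definition tr3 (sr sth sz : R) : R := (sr + sth + sz) / 3.

Definition von_mises (sr sth sz srz : R) : R :=
  let m := tr3 sr sth sz in
  sqrt (3 / 2 * ((sr - m)^2 + (sth - m)^2 + (sz - m)^2 + 2 * srz^2)).

(** Norton creep law with unit coefficient: eps_dot = s * (sigma_vM)^(n-1). *)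
Definition norton (n : R) (s : axi_stress) : axi_stress :=
  let vm r z := von_mises (s_r s r z) (s_th s r z) (s_z s r z) (s_rz s r z) in
  let m r z := tr3 (s_r s r z) (s_th s r z) (s_z s r z) in
  AxiStress (fun r z => (s_r s r z - m r z) * rpow (vm r z) (n - 1))
            (fun r z => (s_th s r z - m r z) * rpow (vm r z) (n - 1))
            (fun r z => (s_z s r z - m r z) * rpow (vm r z) (n - 1))
            (fun r z => s_rz s r z * rpow (vm r z) (n - 1)).

Definition ddot (e s : axi_stress) (r z : R) : R :=
  s_r e r z * s_r s r z + s_th e r z * s_th s r z + s_z e r z * s_z s r z
  + 2 * s_rz e r z * s_rz s r z.

Definition coef_a (ri ro n p : R) : R :=
  p * rpow ri (2 / n) / (rpow ro (2 / n) - rpow ri (2 / n)).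
Definition coef_ar (ri ro n p : R) : R :=
  - p * (rpow ri (2 / n) * rpow ro (2 / n)) / (rpow ro (2 / n) - rpow ri (2 / n)).
Definition coef_ath (ri ro n p : R) : R := (n - 2) / n * coef_ar ri ro n p.
Definition coef_az (ri ro n p : R) : R := (n - 1) / n * coef_ar ri ro n p.

Definition sigma0 (ri ro n p : R) : axi_stress :=
  AxiStress
    (fun r _ => coef_a ri ro n p + coef_ar ri ro n p * rpow r (- 2 / n))
    (fun r _ => coef_a ri ro n p + coef_ath ri ro n p * rpow r (- 2 / n))
    (fun r _ => coef_a ri ro n p + coef_az ri ro n p * rpow r (- 2 / n))
    (fun _ _ => 0).

Definition coef_c (ri ro n p : R) : R :=
  rpow 3 ((n - 1) / 2) * coef_ar ri ro n p * rpow (Rabs (coef_ar ri ro n p)) (n - 1)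
  * rpow n (- n).

(* Main.v *)
From Stdlib Require Import Reals Lra.
From Coquelicot Require Import Coquelicot.
Open Scope R_scope.
Require Import Defs.

Definition clamp (a b x : R) : R := Rmax a (Rmin b x).

Lemma clamp_in a b x : a <= b -> a <= clamp a b x <= b.
Proof. intros. unfold clamp, Rmax, Rmin. repeat destruct Rle_dec; lra. Qed.

Lemma clamp_id a b x : a <= x <= b -> clamp a b x = x.
Proof. intros. unfold clamp, Rmax, Rmin. repeat destruct Rle_dec; lra. Qed.

Lemma clamp_lip a b x y : a <= b -> Rabs (clamp a b x - clamp a b y) <= Rabs (x - y).
Proof. intros. unfold clamp, Rmax, Rmin. repeat destruct Rle_dec; split_Rabs; lra. Qed.

Lemma locally_R x (P : R -> Prop) :
  locally x P <-> exists d : posreal, forall y, Rabs (y - x) < d -> P y.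
Proof. reflexivity. Qed.

Lemma locally_interval a b x : a < x < b -> locally x (fun t => a < t < b).
Proof.
  intros H. apply locally_R.
  assert (Hp : 0 < Rmin (x - a) (b - x)) by (apply Rmin_pos; lra).
  exists (mkposreal _ Hp). simpl. intros y Hy.
  pose proof (Rmin_l (x-a) (b-x)). pose proof (Rmin_r (x-a) (b-x)).
  split_Rabs; lra.
Qed.

Lemma cont2d_fst (k : R -> R -> R) x y : continuity_2d_pt k x y -> continuity_pt (fun u => k u y) x.
Proof.
  intros Hk. apply continuity_pt_filterlim. apply filterlim_locally. intros eps.
  destruct (Hk eps) as [d Hd]. apply locally_R. exists d. intros u Hu.
  change (Rabs (k u y - k x y) < eps). apply Hd; auto. rewrite Rminus_eq_0, Rabs_R0. apply cond_pos.
Qed.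

Lemma cont2d_snd (k : R -> R -> R) x y : continuity_2d_pt k x y -> continuity_pt (fun v => k x v) y.
Proof.
  intros Hk. apply continuity_pt_filterlim. apply filterlim_locally. intros eps.
  destruct (Hk eps) as [d Hd]. apply locally_R. exists d. intros u Hu.
  change (Rabs (k x u - k x y) < eps). apply Hd; auto. rewrite Rminus_eq_0, Rabs_R0. apply cond_pos.
Qed.

Lemma ex_RInt_cpt (f : R -> R) a b : (forall x, continuity_pt f x) -> ex_RInt f a b.
Proof.
  intros H. apply (@ex_RInt_continuous R_CompleteNormedModule). intros z _. apply continuity_pt_filterlim. apply H.
Qed.

Lemma param_cont (k : R -> R -> R) h : 0 <= h ->
  (forall x y, continuity_2d_pt k x y) ->
  forall r, continuity_pt (fun r => RInt (fun z => k r z) 0 h) r.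
Proof.
  intros Hh Hk r.
  intros eps Heps.
  set (e' := eps / (2 * (h + 1))).
  assert (He' : 0 < e') by (unfold e'; apply Rdiv_lt_0_compat; lra).
  destruct (uniform_continuity_2d_1d (fun z r' => k r' z) 0 h r
     (fun x _ => ltac:(
        intros e; destruct (Hk r x e) as [d Hd]; exists d; intros u v Hu Hv; apply Hd; auto))
     (mkposreal _ He')) as [d Hd].
  exists d. split. apply cond_pos.
  intros r' [_ Hr']. simpl in Hr'. unfold R_dist in *.
  assert (E: RInt (fun z => k r' z - k r z) 0 h = RInt (fun z => k r' z) 0 h - RInt (fun z => k r z) 0 h).
  { apply (RInt_minus (V:=R_CompleteNormedModule)); apply ex_RInt_cpt; intros; apply cont2d_snd; apply Hk. }
  simpl; unfold R_dist; rewrite <- E.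
  eapply Rle_lt_trans.
  apply (abs_RInt_le_const _ 0 h e'); auto.
  apply ex_RInt_cpt. intros x. apply continuity_pt_minus; apply cont2d_snd; apply Hk.
  intros t Ht. left.
  apply (Hd t r t r'); try lra.
  split_Rabs; lra. split_Rabs; lra. rewrite Rminus_eq_0, Rabs_R0. apply cond_pos.
  unfold e'. rewrite Rminus_0_r. apply Rmult_lt_reg_r with (2*(h+1)). lra.
  field_simplify; try lra. nra.
Qed.
Lemma within_deriv (F : R -> R) a b x l : a < x < b ->
  filterlim (fun t => (F t - F x) / (t - x))
      (within (fun t => a <= t <= b /\ t <> x) (locally x)) (locally l) ->
  is_derive F x l.
Proof.
  intros Hx Hl. apply is_derive_Reals. intros eps Heps.
  destruct (proj1 (filterlim_locally _ _) Hl (mkposreal _ Heps)) as [d Hd].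
  assert (Hp : 0 < Rmin d (Rmin (x - a) (b - x))) by (apply Rmin_pos; [apply cond_pos| apply Rmin_pos; lra]).
  exists (mkposreal _ Hp). intros hh Hh0 Hhd. simpl in Hhd.
  pose proof (Rmin_l d (Rmin (x - a) (b - x))). pose proof (Rmin_r d (Rmin (x - a) (b - x))).
  pose proof (Rmin_l (x-a) (b-x)). pose proof (Rmin_r (x-a) (b-x)).
  assert (Hin : ball x d (x + hh)).
  { change (Rabs (x + hh - x) < d). replace (x + hh - x) with hh by ring. lra. }
  specialize (Hd (x + hh) Hin).
  assert (Hdom : a <= x + hh <= b /\ x + hh <> x).
  { split; [split_Rabs; lra| lra]. }
  specialize (Hd Hdom). change (Rabs ((F (x + hh) - F x) / (x + hh - x) - l) < eps) in Hd.
  replace (x + hh - x) with hh in Hd by ring. exact Hd.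
Qed.

Lemma ftc (F f Fe fe : R -> R) a b : a < b ->
  (forall x, a < x < b -> is_derive F x (f x)) ->
  (forall x, a <= x <= b -> Fe x = F x) ->
  (forall x, a <= x <= b -> fe x = f x) ->
  (forall x, continuity_pt Fe x) -> (forall x, continuity_pt fe x) ->
  RInt f a b = F b - F a.
Proof.
  intros Hab HD HF Hf HFc Hfc.
  set (I := fun x => RInt fe a x).
  assert (HI : forall x, is_derive I x (fe x)).
  { intros x. apply (is_derive_RInt fe I a x).
    apply locally_R. exists (mkposreal 1 Rlt_0_1). intros y _.
    unfold I. apply (RInt_correct (V:=R_CompleteNormedModule)). apply ex_RInt_cpt. exact Hfc.
    apply continuity_pt_filterlim. apply Hfc. }
  destruct (MVT_gen (fun x => Fe x - I x) a b (fun _ => 0)) as [c [_ Hc]].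
  - intros x Hx. rewrite Rmin_left, Rmax_right in Hx by lra.
    assert (D1 : is_derive Fe x (f x)).
    { apply is_derive_ext_loc with F; [|apply HD; lra].
      generalize (locally_interval a b x Hx). apply filter_imp. intros t Ht. symmetry. apply HF. lra. }
    pose proof (is_derive_minus _ _ _ _ _ D1 (HI x)) as D.
    rewrite Hf in D by lra.
    replace 0 with (minus (f x) (f x)). exact D.
    unfold minus, plus, opp; simpl. ring.
  - intros x _. apply continuity_pt_minus. apply HFc.
    apply continuity_pt_filterlim. apply (ex_derive_continuous I). eexists. apply HI.
  - assert (E1 : I a = 0) by (unfold I; apply (RInt_point (V:=R_CompleteNormedModule))).
    assert (E2 : I b = RInt f a b).
    { unfold I. apply RInt_ext. intros x Hx. rewrite Rmin_left, Rmax_right in Hx by lra. apply Hf. lra. }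
    rewrite <- HF, <- (HF a) by lra. rewrite <- E2. lra.
Qed.

Lemma rect_cont g r0 r1 z0 z1 : r0 <= r1 -> z0 <= z1 -> cont_on_rect r0 r1 z0 z1 g ->
  forall x y, continuity_2d_pt (fun u v => g (clamp r0 r1 u) (clamp z0 z1 v)) x y.
Proof.
  intros H0 H1 Hg x y eps.
  assert (HR : in_rect r0 r1 z0 z1 (clamp r0 r1 x) (clamp z0 z1 y)) by (split; apply clamp_in; auto).
  pose proof (proj1 (filterlim_locally _ _) (Hg _ _ HR) eps) as Hw.
  destruct Hw as [d Hd].
  exists d. intros u v Hu Hv.
  assert (Hb : ball (clamp r0 r1 x, clamp z0 z1 y) d (clamp r0 r1 u, clamp z0 z1 v)).
  { split.
    - change (Rabs (clamp r0 r1 u - clamp r0 r1 x) < d). eapply Rle_lt_trans; [apply clamp_lip; auto| exact Hu].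
    - change (Rabs (clamp z0 z1 v - clamp z0 z1 y) < d). eapply Rle_lt_trans; [apply clamp_lip; auto| exact Hv]. }
  exact (Hd _ Hb (conj (clamp_in _ _ _ H0) (clamp_in _ _ _ H1))).
Qed.
Lemma rpow_pos x y : 0 < x -> rpow x y = Rpower x y.
Proof. intros H. unfold rpow. destruct Rlt_dec; [reflexivity| lra]. Qed.

Lemma coef_ar_neg ri ro n p : 0 < ri -> ri < ro -> 0 < n -> 0 < p -> coef_ar ri ro n p < 0.
Proof.
  intros H1 H2 H3 H4. unfold coef_ar. rewrite !rpow_pos by lra. unfold Rpower.
  assert (L : 2 / n * ln ri < 2 / n * ln ro).
  { apply Rmult_lt_compat_l. apply Rdiv_lt_0_compat; lra. apply ln_increasing; lra. }
  pose proof (exp_increasing _ _ L).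
  pose proof (exp_pos (2 / n * ln ri)). pose proof (exp_pos (2 / n * ln ro)).
  assert (0 < exp (2 / n * ln ri) * exp (2 / n * ln ro)) by (apply Rmult_lt_0_compat; lra).
  unfold Rdiv. rewrite Ropp_mult_distr_l_reverse, Ropp_mult_distr_l_reverse.
  apply Ropp_lt_gt_0_contravar. apply Rmult_lt_0_compat. apply Rmult_lt_0_compat; lra.
  apply Rinv_0_lt_compat. lra.
Qed.

Lemma ddot_eq ri ro n p ds r z : 0 < ri -> ri < ro -> 0 < n -> 0 < p -> 0 < r ->
  ddot (norton n (sigma0 ri ro n p)) ds r z
  = coef_c ri ro n p / (r * r) * (s_r ds r z - s_th ds r z).
Proof.
  intros H1 H2 H3 H4 Hr.
  unfold ddot, norton, sigma0, coef_ath, coef_az, coef_c; simpl.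
  set (A := coef_ar ri ro n p). set (a := coef_a ri ro n p).
  assert (HA : A < 0) by (apply coef_ar_neg; auto).
  set (L := - 2 / n * ln r).
  assert (Hrho : rpow r (-2 / n) = exp L) by (rewrite rpow_pos by lra; reflexivity).
  rewrite Hrho.
  pose proof (exp_pos L) as HL.
  assert (Hm : tr3 (a + A * exp L) (a + (n - 2) / n * A * exp L) (a + (n - 1) / n * A * exp L)
             = a + (n - 1) / n * A * exp L) by (unfold tr3; field; lra).
  rewrite Hm.
  set (K := / 2 * ln 3 + ln (- A) + L - ln n).
  assert (Hvm : von_mises (a + A * exp L) (a + (n - 2) / n * A * exp L) (a + (n - 1) / n * A * exp L) 0
               = exp K).
  { unfold von_mises. rewrite Hm.
    replace (3 / 2 * ((a + A * exp L - (a + (n - 1) / n * A * exp L)) ^ 2 +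
        (a + (n - 2) / n * A * exp L - (a + (n - 1) / n * A * exp L)) ^ 2 +
        (a + (n - 1) / n * A * exp L - (a + (n - 1) / n * A * exp L)) ^ 2 + 2 * 0 ^ 2))
      with (3 * Rsqr (- A * exp L / n)) by (unfold Rsqr; field; lra).
    rewrite sqrt_mult by (try lra; apply Rle_0_sqr). rewrite sqrt_Rsqr_abs.
    rewrite Rabs_pos_eq.
    2:{ unfold Rdiv. apply Rmult_le_pos. apply Rmult_le_pos; lra. left; apply Rinv_0_lt_compat; lra. }
    rewrite <- Rpower_sqrt by lra. unfold Rpower, K.
    unfold Rminus. rewrite !exp_plus, exp_Ropp, !exp_ln by lra. field. lra. }
  rewrite Hvm. rewrite !rpow_pos by (try apply exp_pos; try lra; split_Rabs; lra).
  rewrite Rabs_left by lra.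
  unfold Rpower. rewrite ln_exp.
  replace (r * r) with (exp (ln r) * exp (ln r)) by (rewrite exp_ln; lra).
  assert (E1 : exp ((n - 1) / 2 * ln 3) * A * exp ((n - 1) * ln (- A)) * exp (- n * ln n)
            / (exp (ln r) * exp (ln r))
            = A * exp ((n - 1) / 2 * ln 3 + (n - 1) * ln (- A) + - n * ln n - ln r - ln r)).
  { unfold Rminus. rewrite !exp_plus, !exp_Ropp. field. pose proof (exp_pos (ln r)); lra. }
  assert (E2 : A * exp L / n * exp ((n - 1) * K)
            = A * exp (L - ln n + (n - 1) * K)).
  { unfold Rminus. rewrite !exp_plus, exp_Ropp, exp_ln by lra. field. lra. }
  assert (E3 : (n - 1) / 2 * ln 3 + (n - 1) * ln (- A) + - n * ln n - ln r - ln r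
             = L - ln n + (n - 1) * K) by (unfold K, L; field; lra).
  rewrite E1, E3, <- E2. field. lra.
Qed.
Lemma RInt_scal_R (f : R -> R) a b k : ex_RInt f a b -> RInt (fun x => k * f x) a b = k * RInt f a b.
Proof. intros H. apply (RInt_scal (V:=R_CompleteNormedModule)); auto. Qed.
Lemma RInt_plus_R (f g : R -> R) a b : ex_RInt f a b -> ex_RInt g a b -> RInt (fun x => f x + g x) a b = RInt f a b + RInt g a b.
Proof. intros. apply (RInt_plus (V:=R_CompleteNormedModule)); auto. Qed.
Lemma RInt_zero a b : RInt (fun _ => 0) a b = 0.
Proof. rewrite (RInt_const (V:=R_CompleteNormedModule)). apply Rmult_0_r. Qed.

Lemma ex_z ri ro H h g : 0 <= h <= H -> ri <= ro ->
  (forall x y, continuity_2d_pt (fun u v => g (clamp ri ro u) (clamp 0 H v)) x y) ->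
  forall r, ri <= r <= ro -> ex_RInt (fun z => g r z) 0 h.
Proof.
  intros Hh Hr Hc r Hrr.
  apply ex_RInt_ext with (fun z => g (clamp ri ro r) (clamp 0 H z)).
  - intros x Hx. rewrite Rmin_left, Rmax_right in Hx by lra.
    rewrite !clamp_id by lra. reflexivity.
  - apply ex_RInt_cpt. intros x. apply (cont2d_snd (fun u v => g (clamp ri ro u) (clamp 0 H v))). apply Hc.
Qed.

Lemma ex_r ri ro H h g : 0 <= h <= H -> ri <= ro ->
  (forall x y, continuity_2d_pt (fun u v => g (clamp ri ro u) (clamp 0 H v)) x y) ->
  ex_RInt (fun r => g r h) ri ro.
Proof.
  intros Hh Hr Hc.
  apply ex_RInt_ext with (fun r => g (clamp ri ro r) (clamp 0 H h)).
  - intros x Hx. rewrite Rmin_left, Rmax_right in Hx by lra.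
    rewrite !clamp_id by lra. reflexivity.
  - apply ex_RInt_cpt. intros x. apply (cont2d_fst (fun u v => g (clamp ri ro u) (clamp 0 H v))). apply Hc.
Qed.

Lemma ftc_z ri ro H h g gz : 0 < h < H -> ri <= ro ->
  cont_on_rect ri ro 0 H g -> partial_z_on_rect ri ro 0 H g gz -> cont_on_rect ri ro 0 H gz ->
  forall r, ri <= r <= ro -> RInt (fun z => gz r z) 0 h = g r h - g r 0.
Proof.
  intros Hh Hr Cg Pg Cgz r Hrr.
  apply (ftc (fun t => g r t) (fun t => gz r t)
             (fun t => g (clamp ri ro r) (clamp 0 H t)) (fun t => gz (clamp ri ro r) (clamp 0 H t))).
  - lra.
  - intros x Hx. apply (within_deriv (fun t => g r t) 0 H x). lra.
    apply Pg. split; lra.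
  - intros x Hx. rewrite !clamp_id by lra. reflexivity.
  - intros x Hx. rewrite !clamp_id by lra. reflexivity.
  - intros x. apply (cont2d_snd (fun u v => g (clamp ri ro u) (clamp 0 H v))).
    apply rect_cont; auto; lra.
  - intros x. apply (cont2d_snd (fun u v => gz (clamp ri ro u) (clamp 0 H v))).
    apply rect_cont; auto; lra.
Qed.

Lemma deriv_G ri ro H h g gr : 0 < h < H -> ri < ro ->
  cont_on_rect ri ro 0 H g -> partial_r_on_rect ri ro 0 H g gr -> cont_on_rect ri ro 0 H gr ->
  forall r, ri < r < ro ->
  is_derive (fun r => RInt (fun z => g r z) 0 h) r (RInt (fun z => gr r z) 0 h).
Proof.
  intros Hh Hr Cg Pg Cgr r Hrr.
  assert (HD : forall u v, ri < u < ro -> is_derive (fun z => g z (clamp 0 H v)) u (gr u (clamp 0 H v))).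
  { intros u v Hu. apply (within_deriv (fun t => g t (clamp 0 H v)) ri ro u). lra.
    apply Pg. split. lra. apply clamp_in. lra. }
  assert (HDe : forall u v, ri < u < ro -> Derive (fun z => g z (clamp 0 H v)) u = gr u (clamp 0 H v)).
  { intros u v Hu. apply is_derive_unique. apply HD; auto. }
  pose proof (rect_cont gr ri ro 0 H ltac:(lra) ltac:(lra) Cgr) as Kgr.
  pose proof (rect_cont g ri ro 0 H ltac:(lra) ltac:(lra) Cg) as Kg.
  pose proof (is_derive_RInt_param (fun u t => g u (clamp 0 H t)) 0 h r) as P.
  assert (Hval : RInt (fun t => Derive (fun u => g u (clamp 0 H t)) r) 0 h = RInt (fun z => gr r z) 0 h).
  { apply RInt_ext. intros x Hx. rewrite Rmin_left, Rmax_right in Hx by lra.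
    rewrite HDe by lra. rewrite clamp_id by lra. reflexivity. }
  rewrite <- Hval.
  apply is_derive_ext_loc with (fun x0 => RInt (fun t => g x0 (clamp 0 H t)) 0 h).
  { generalize (locally_interval ri ro r Hrr). apply filter_imp. intros u Hu.
    apply RInt_ext. intros x Hx. rewrite Rmin_left, Rmax_right in Hx by lra.
    rewrite clamp_id by lra. reflexivity. }
  apply P.
  - generalize (locally_interval ri ro r Hrr). apply filter_imp. intros u Hu t _.
    eexists. apply HD. auto.
  - intros t _ eps. destruct (Kgr r t eps) as [d1 Hd1].
    assert (Hp : 0 < Rmin d1 (Rmin (r - ri) (ro - r))) by (apply Rmin_pos; [apply cond_pos| apply Rmin_pos; lra]).
    exists (mkposreal _ Hp). simpl. intros u v Hu Hv.
    pose proof (Rmin_l d1 (Rmin (r - ri) (ro - r))). pose proof (Rmin_r d1 (Rmin (r - ri) (ro - r))).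
    pose proof (Rmin_l (r - ri) (ro - r)). pose proof (Rmin_r (r - ri) (ro - r)).
    assert (Hu' : ri < u < ro) by (split_Rabs; lra).
    rewrite !HDe by lra.
    specialize (Hd1 u v ltac:(lra) ltac:(lra)). simpl in Hd1.
    rewrite (clamp_id ri ro u), (clamp_id ri ro r) in Hd1 by lra. exact Hd1.
  - generalize (locally_interval ri ro r Hrr). apply filter_imp. intros u Hu.
    apply ex_RInt_cpt. intros x.
    pose proof (cont2d_snd _ u x (Kg u x)) as K. simpl in K.
    rewrite clamp_id in K by lra. exact K.
Qed.

Lemma ftc_r ri ro H h g gr : 0 < h < H -> ri < ro ->
  cont_on_rect ri ro 0 H g -> partial_r_on_rect ri ro 0 H g gr -> cont_on_rect ri ro 0 H gr ->
  RInt (fun r => RInt (fun z => gr r z) 0 h) ri ro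
  = RInt (fun z => g ro z) 0 h - RInt (fun z => g ri z) 0 h.
Proof.
  intros Hh Hr Cg Pg Cgr.
  pose proof (rect_cont gr ri ro 0 H ltac:(lra) ltac:(lra) Cgr) as Kgr.
  pose proof (rect_cont g ri ro 0 H ltac:(lra) ltac:(lra) Cg) as Kg.
  apply (ftc (fun r => RInt (fun z => g r z) 0 h) (fun r => RInt (fun z => gr r z) 0 h)
    (fun r => RInt (fun z => g (clamp ri ro r) (clamp 0 H z)) 0 h)
    (fun r => RInt (fun z => gr (clamp ri ro r) (clamp 0 H z)) 0 h)).
  - lra.
  - intros x Hx. apply (deriv_G ri ro H); auto.
  - intros x Hx. apply RInt_ext. intros z Hz. rewrite Rmin_left, Rmax_right in Hz by lra.
    rewrite !clamp_id by lra. reflexivity.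
  - intros x Hx. apply RInt_ext. intros z Hz. rewrite Rmin_left, Rmax_right in Hz by lra.
    rewrite !clamp_id by lra. reflexivity.
  - apply (param_cont (fun u v => g (clamp ri ro u) (clamp 0 H v))). lra. exact Kg.
  - apply (param_cont (fun u v => gr (clamp ri ro u) (clamp 0 H v))). lra. exact Kgr.
Qed.

Theorem mainTheorem1 (ri ro h H n p : R) :
  0 < ri -> ri < ro -> 0 < h -> h < H -> 0 < n -> 0 < p ->
  forall ds : axi_stress, admissible ri ro H ds ->
  RInt (fun r => RInt (fun z => ddot (norton n (sigma0 ri ro n p)) ds r z) 0 h * r) ri ro
  = - RInt (fun r => coef_c ri ro n p / r * s_rz ds r h * r) ri ro.
Proof.
  intros Hri Hro Hh HH Hn Hp ds Had.
  destruct Had as [drr [drz [dthr [dthz [dzr [dzz [drzr [drzz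
    [[Cr [Pr_r [Pr_z [Cdrr Cdrz]]]] [Cth [Cz [[Crz [Prz_r [Prz_z [Cdrzr Cdrzz]]]] [Eq [BCr BCz]]]]]]]]]]]]]].
  set (c := coef_c ri ro n p).
  pose proof (rect_cont _ ri ro 0 H ltac:(lra) ltac:(lra) Cdrr) as Kdrr.
  pose proof (rect_cont _ ri ro 0 H ltac:(lra) ltac:(lra) Cdrzz) as Kdrzz.
  pose proof (rect_cont _ ri ro 0 H ltac:(lra) ltac:(lra) Crz) as Krz.
  assert (Step1 : forall r, ri < r < ro ->
    RInt (fun z => ddot (norton n (sigma0 ri ro n p)) ds r z) 0 h * r
    = - c * (RInt (fun z => drr r z) 0 h + s_rz ds r h)).
  { intros r Hr.
    rewrite (RInt_ext _ (fun z => (- c / r) * (drr r z + drzz r z))).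
    2:{ intros z Hz. rewrite Rmin_left, Rmax_right in Hz by lra.
        rewrite ddot_eq by lra. fold c.
        destruct (Eq r z ltac:(split; lra)) as [E1 _].
        replace (s_r ds r z - s_th ds r z) with (- r * (drr r z + drzz r z)).
        match goal with |- ?a = ?b => change (@eq R a b) end. field. lra.
        assert (E2 : / r * (s_r ds r z - s_th ds r z) = - (drr r z + drzz r z)) by lra.
        replace (s_r ds r z - s_th ds r z) with (r * (/ r * (s_r ds r z - s_th ds r z))) by (field; lra).
        rewrite E2. ring. }
    assert (X1 : ex_RInt (fun z => drr r z) 0 h) by (apply (ex_z ri ro H); auto; lra).
    assert (X2 : ex_RInt (fun z => drzz r z) 0 h) by (apply (ex_z ri ro H); auto; lra).
    rewrite RInt_scal_R.
    2:{ apply (ex_RInt_plus (V:=R_NormedModule)); auto. }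
    rewrite RInt_plus_R by auto.
    rewrite (ftc_z ri ro H h (s_rz ds) drzz) by (auto; lra).
    rewrite (proj1 (BCz r ltac:(lra))).
    change (RInt (drr r) 0 h) with (RInt (fun z => drr r z) 0 h). match goal with |- ?a = ?b => change (@eq R a b) end. field. lra. }
  rewrite (RInt_ext _ (fun r => - c * (RInt (fun z => drr r z) 0 h + s_rz ds r h))).
  2:{ intros x Hx. rewrite Rmin_left, Rmax_right in Hx by lra. apply Step1; lra. }
  rewrite (RInt_ext (fun r => c / r * s_rz ds r h * r) (fun r => c * s_rz ds r h)).
  2:{ intros x Hx. rewrite Rmin_left, Rmax_right in Hx by lra.
      match goal with |- ?a = ?b => change (@eq R a b) end. field. lra. }
  assert (XD : ex_RInt (fun r => RInt (fun z => drr r z) 0 h) ri ro).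
  { apply ex_RInt_ext with (fun r => RInt (fun z => drr (clamp ri ro r) (clamp 0 H z)) 0 h).
    - intros x Hx. rewrite Rmin_left, Rmax_right in Hx by lra.
      apply RInt_ext. intros z Hz. rewrite Rmin_left, Rmax_right in Hz by lra.
      rewrite !clamp_id by lra. reflexivity.
    - apply ex_RInt_cpt. apply (param_cont (fun u v => drr (clamp ri ro u) (clamp 0 H v))). lra. exact Kdrr. }
  assert (XS : ex_RInt (fun r => s_rz ds r h) ri ro) by (apply (ex_r ri ro H); auto; lra).
  rewrite RInt_scal_R.
  2:{ apply (ex_RInt_plus (V:=R_NormedModule)); auto. }
  rewrite RInt_scal_R by auto.
  rewrite RInt_plus_R by auto.
  rewrite (ftc_r ri ro H h (s_r ds) drr) by (auto; lra).
  rewrite (RInt_ext (fun z => s_r ds ro z) (fun _ => 0)).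
  2:{ intros x Hx. rewrite Rmin_left, Rmax_right in Hx by lra. apply (BCr x ltac:(lra)). }
  rewrite (RInt_ext (fun z => s_r ds ri z) (fun _ => 0)).
  2:{ intros x Hx. rewrite Rmin_left, Rmax_right in Hx by lra. apply (BCr x ltac:(lra)). }
  rewrite RInt_zero.
  match goal with |- ?a = ?b => change (@eq R a b) end. ring.
Qed.
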